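(* Let $\mathcal{V}$ and $\mathcal{W}$ be quaternionic two-sided Banach algebras with unit $1\neq 0$, let $\mathcal{A}:\mathcal{V}\to\mathcal{W}$ be a homomorphism, and let $a,b\in\mathcal{V}$. (1) If $ab\in Pr(\Phi_{\mathcal{A}})$ and $ba\in Pr(\Phi_{\mathcal{A}})$, then $$\sigma_{S,\mathcal{A}}^{\Phi}(a+b)\setminus\{0\}=\left[\sigma_{S,\mathcal{A}}^{\Phi}(a)\cup\sigma_{S,\mathcal{A}}^{\Phi}(b)\right]\setminus\{0\}.$$ (2) If $ab\in \mathcal{A}^{-1}(0)$ and $ba\in \mathcal{A}^{-1}(0)$, then $$\sigma_{S,\mathcal{A}}^{\Phi^{0}}(a+b)\setminus\{0\}\subset\left[\sigma_{S,\mathcal{A}}^{\Phi^{0}}(a)\cup\sigma_{S,\mathcal{A}}^{\Phi^{0}}(b)\right]\setminus\{0\},$$ and if, further, $\sigma_{S,\mathcal{A}}^{\Phi^{0}}(a)=\sigma_{S,\mathcal{A}}^{\Phi}(a)$, then $$\sigma_{S,\mathcal{A}}^{\Phi^{0}}(a+b)\setminus\{0\}=\left[\sigma_{S,\mathcal{A}}^{\Phi^{0}}(a)\cup\sigma_{S,\mathcal{A}}^{\Phi^{0}}(b)\right]\setminus\{0\}.$$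
   Context: $\mathbb{H}$ denotes the quaternions; for $q\in\mathbb{H}$, $Re(q)$ is its real part and $|q|$ its norm. A quaternionic two-sided Banach algebra with unit is a two-sided $\mathbb{H}$-vector space $\mathcal{V}$ with an associative product satisfying $x(y+z)=xy+xz$, $(x+y)z=xz+yz$, $q(xy)=(qx)y$, $(xy)q=x(yq)$ for $x,y,z\in\mathcal{V}$, $q\in\mathbb{H}$, complete with respect to a norm satisfying $\|qx\|=|q|\|x\|=\|xq\|$ and $\|xy\|\le\|x\|\|y\|$, with a unit $1_{\mathcal{V}}$, $\|1_{\mathcal{V}}\|=1$. A homomorphism $\mathcal{A}:\mathcal{V}\to\mathcal{W}$ satisfies $\mathcal{A}(u+v)=\mathcal{A}(u)+\mathcal{A}(v)$, $\mathcal{A}(uv)=\mathcal{A}(u)\mathcal{A}(v)$, $\mathcal{A}(qu)=q\mathcal{A}(u)$, $\mathcal{A}(uq)=\mathcal{A}(u)q$, $\mathcal{A}(1_{\mathcal{V}})=1_{\mathcal{W}}$. $\mathcal{V}^{-1},\mathcal{W}^{-1}$ denote the groups of invertible elements. For $v\in\mathcal{V}$ and $q\in\mathbb{H}$ put $R_q(v)=v^2-2Re(q)v+|q|^2 1_{\mathcal{V}}$. Define $\Phi_{\mathcal{A}}=\{v\in\mathcal{V}:\mathcal{A}(v)\in\mathcal{W}^{-1}\}$ (Fredholm elements), $\Phi_{\mathcal{A}}^0=\mathcal{V}^{-1}+\mathcal{A}^{-1}(0)$ (Weyl elements), $Pr(\Phi_{\mathcal{A}})=\{p\in\mathcal{V}: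 p+t\in\Phi_{\mathcal{A}}\ \forall t\in\Phi_{\mathcal{A}}\}$ (Fredholm perturbations). The Fredholm S-spectrum is $\sigma_{S,\mathcal{A}}^{\Phi}(v)=\{q\in\mathbb{H}: R_q(v)\notin\Phi_{\mathcal{A}}\}$ and the Weyl S-spectrum is $\sigma_{S,\mathcal{A}}^{\Phi^0}(v)=\{q\in\mathbb{H}: R_q(v)\notin\Phi_{\mathcal{A}}^0\}$. *)

(* Defs.v *)
From Stdlib Require Import Reals.
Open Scope R_scope.

Record quat : Type := mkQ { q0 : R; q1 : R; q2 : R; q3 : R }.

Definition Qadd (p q : quat) : quat :=
  mkQ (q0 p + q0 q) (q1 p + q1 q) (q2 p + q2 q) (q3 p + q3 q).

Definition Qmul (p q : quat) : quat :=
  mkQ (q0 p * q0 q - q1 p * q1 q - q2 p * q2 q - q3 p * q3 q)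
      (q0 p * q1 q + q1 p * q0 q + q2 p * q3 q - q3 p * q2 q)
      (q0 p * q2 q - q1 p * q3 q + q2 p * q0 q + q3 p * q1 q)
      (q0 p * q3 q + q1 p * q2 q - q2 p * q1 q + q3 p * q0 q).

Definition Qzero : quat := mkQ 0 0 0 0.
Definition Qone : quat := mkQ 1 0 0 0.
Definition Qreal (r : R) : quat := mkQ r 0 0 0.
Definition Qre (q : quat) : R := q0 q.
Definition Qnorm (q : quat) : R :=
  sqrt (q0 q * q0 q + q1 q * q1 q + q2 q * q2 q + q3 q * q3 q).

Record QBA : Type := {
  car : Type;
  vadd : car -> car -> car;
  vzero : car;
  vopp : car -> car;
  vmul : car -> car -> car;
  vone : car;
  lsc : quat -> car -> car;
  rsc : car -> quat -> car;
  vnorm : car -> R;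
  vaddA : forall x y z, vadd x (vadd y z) = vadd (vadd x y) z;
  vaddC : forall x y, vadd x y = vadd y x;
  vadd0 : forall x, vadd x vzero = x;
  vaddN : forall x, vadd x (vopp x) = vzero;
  lsc_addq : forall p q x, lsc (Qadd p q) x = vadd (lsc p x) (lsc q x);
  lsc_addv : forall p x y, lsc p (vadd x y) = vadd (lsc p x) (lsc p y);
  lsc_mul : forall p q x, lsc (Qmul p q) x = lsc p (lsc q x);
  lsc_one : forall x, lsc Qone x = x;
  rsc_addq : forall x p q, rsc x (Qadd p q) = vadd (rsc x p) (rsc x q);
  rsc_addv : forall x y p, rsc (vadd x y) p = vadd (rsc x p) (rsc y p);
  rsc_mul : forall x p q, rsc x (Qmul p q) = rsc (rsc x p) q;
  rsc_one : forall x, rsc x Qone = x;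
  lsc_rsc : forall p x q, rsc (lsc p x) q = lsc p (rsc x q);
  vmulA : forall x y z, vmul x (vmul y z) = vmul (vmul x y) z;
  vmulDr : forall x y z, vmul x (vadd y z) = vadd (vmul x y) (vmul x z);
  vmulDl : forall x y z, vmul (vadd x y) z = vadd (vmul x z) (vmul y z);
  lsc_vmul : forall q x y, lsc q (vmul x y) = vmul (lsc q x) y;
  rsc_vmul : forall x y q, rsc (vmul x y) q = vmul x (rsc y q);
  vmul1l : forall x, vmul vone x = x;
  vmul1r : forall x, vmul x vone = x;
  vnorm_ge0 : forall x, 0 <= vnorm x;
  vnorm_eq0 : forall x, vnorm x = 0 -> x = vzero;
  vnorm0 : vnorm vzero = 0;
  vnorm_triangle : forall x y, vnorm (vadd x y) <= vnorm x + vnorm y;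
  vnorm_lsc : forall q x, vnorm (lsc q x) = Qnorm q * vnorm x;
  vnorm_rsc : forall x q, vnorm (rsc x q) = Qnorm q * vnorm x;
  vnorm_mul : forall x y, vnorm (vmul x y) <= vnorm x * vnorm y;
  vnorm_one : vnorm vone = 1;
  vcomplete : forall u : nat -> car,
    (forall eps, 0 < eps -> exists N, forall m n, (N <= m)%nat -> (N <= n)%nat ->
        vnorm (vadd (u m) (vopp (u n))) < eps) ->
    exists l, forall eps, 0 < eps -> exists N, forall n, (N <= n)%nat ->
        vnorm (vadd (u n) (vopp l)) < eps
}.

Arguments vadd {_}. Arguments vzero {_}. Arguments vopp {_}. Arguments vmul {_}.
Arguments vone {_}. Arguments lsc {_}. Arguments rsc {_}. Arguments vnorm {_}.

Definition is_hom (V W : QBA) (A : car V -> car W) : Prop :=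
  (forall u v, A (vadd u v) = vadd (A u) (A v)) /\
  (forall u v, A (vmul u v) = vmul (A u) (A v)) /\
  (forall q u, A (lsc q u) = lsc q (A u)) /\
  (forall u q, A (rsc u q) = rsc (A u) q) /\
  A vone = vone.

Definition invertible {V : QBA} (x : car V) : Prop :=
  exists y, vmul x y = vone /\ vmul y x = vone.

Definition Rq {V : QBA} (q : quat) (v : car V) : car V :=
  vadd (vadd (vmul v v) (vopp (lsc (Qreal (2 * Qre q)) v)))
       (lsc (Qreal (Qnorm q ^ 2)) vone).

Section Fred.
Context {V W : QBA} (A : car V -> car W).

Definition Fredholm (v : car V) : Prop := invertible (A v).
Definition Weyl (v : car V) : Prop :=
  exists u k, invertible u /\ A k = vzero /\ v = vadd u k.
Definition FredPert (p : car V) : Prop :=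
  forall t, Fredholm t -> Fredholm (vadd p t).
Definition fred_spec (v : car V) (q : quat) : Prop := ~ Fredholm (Rq q v).
Definition weyl_spec (v : car V) (q : quat) : Prop := ~ Weyl (Rq q v).
End Fred.

(* Main.v *)
Require Import Defs.
From Stdlib Require Import Reals Lra Lia Classical ZArith Setoid Morphisms.
Open Scope R_scope.

Section G.
Variable U : QBA.
Implicit Types x y z : car U.

Lemma add0l x : vadd vzero x = x.
Proof. rewrite vaddC; apply vadd0. Qed.
Lemma addNl x : vadd (vopp x) x = vzero.
Proof. rewrite vaddC; apply vaddN. Qed.
Lemma add_cancel_l z x y : vadd z x = vadd z y -> x = y.
Proof.
  intro H. rewrite <- (add0l x), <- (add0l y), <- (addNl z), <- !vaddA, H; auto.
Qed.
Lemma opp_unique x y : vadd x y = vzero -> y = vopp x.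
Proof. intro H. apply (add_cancel_l x). rewrite H, vaddN; auto. Qed.
Lemma oppK x : vopp (vopp x) = x.
Proof. symmetry; apply opp_unique, addNl. Qed.
Lemma opp0 : vopp (@vzero U) = vzero.
Proof. symmetry; apply opp_unique, vadd0. Qed.
Lemma oppD x y : vopp (vadd x y) = vadd (vopp x) (vopp y).
Proof.
  symmetry; apply opp_unique.
  rewrite (vaddC _ (vopp x)), vaddA, <- (vaddA _ x), vaddN, vadd0, vaddN; auto.
Qed.
Lemma sub_eq x y : vadd x (vopp y) = vzero -> x = y.
Proof. intro H. rewrite <- (oppK y). apply opp_unique. rewrite vaddC; auto. Qed.
Lemma sub_addr x y : vadd (vadd x y) (vopp y) = x.
Proof. rewrite <- vaddA, vaddN, vadd0; auto. Qed.
Lemma addr_sub x y : vadd (vadd x (vopp y)) y = x.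
Proof. rewrite <- vaddA, addNl, vadd0; auto. Qed.
Lemma self_add_eq0 x : vadd x x = x -> x = vzero.
Proof. intro H. apply (add_cancel_l x). rewrite H, vadd0; auto. Qed.

Lemma mulr0 x : vmul x vzero = vzero.
Proof. apply self_add_eq0. rewrite <- vmulDr, vadd0; auto. Qed.
Lemma mul0r x : vmul vzero x = vzero.
Proof. apply self_add_eq0. rewrite <- vmulDl, vadd0; auto. Qed.
Lemma mulNr x y : vmul (vopp x) y = vopp (vmul x y).
Proof. apply opp_unique. rewrite <- vmulDl, vaddN, mul0r; auto. Qed.
Lemma mulrN x y : vmul x (vopp y) = vopp (vmul x y).
Proof. apply opp_unique. rewrite <- vmulDr, vaddN, mulr0; auto. Qed.

Lemma Qadd_real r s : Qadd (Qreal r) (Qreal s) = Qreal (r + s).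
Proof. unfold Qadd, Qreal; simpl; f_equal; ring. Qed.
Lemma Qmul_real r s : Qmul (Qreal r) (Qreal s) = Qreal (r * s).
Proof. unfold Qmul, Qreal; simpl; f_equal; ring. Qed.
Lemma Qnorm_real r : Qnorm (Qreal r) = Rabs r.
Proof.
  unfold Qnorm, Qreal; simpl. rewrite <- sqrt_Rsqr_abs. f_equal. unfold Rsqr; ring.
Qed.

Lemma lsc0v q : lsc q (@vzero U) = vzero.
Proof. apply self_add_eq0. rewrite <- lsc_addv, vadd0; auto. Qed.
Lemma lscN q x : lsc q (vopp x) = vopp (lsc q x).
Proof. apply opp_unique. rewrite <- lsc_addv, vaddN, lsc0v; auto. Qed.
Lemma lscD q x y : lsc q (vadd x y) = vadd (lsc q x) (lsc q y).
Proof. apply lsc_addv. Qed.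
Lemma lsc_r0 x : lsc (Qreal 0) x = vzero.
Proof. apply self_add_eq0. rewrite <- lsc_addq, Qadd_real, Rplus_0_r; auto. Qed.
Lemma lsc_radd r s x : lsc (Qreal (r + s)) x = vadd (lsc (Qreal r) x) (lsc (Qreal s) x).
Proof. rewrite <- Qadd_real, lsc_addq; auto. Qed.
Lemma lsc_rmul r s x : lsc (Qreal (r * s)) x = lsc (Qreal r) (lsc (Qreal s) x).
Proof. rewrite <- Qmul_real, lsc_mul; auto. Qed.
Lemma lsc_r1 x : lsc (Qreal 1) x = x.
Proof. apply lsc_one. Qed.
Lemma lsc_ropp r x : lsc (Qreal (- r)) x = vopp (lsc (Qreal r) x).
Proof. apply opp_unique. rewrite <- lsc_radd. replace (r + - r) with 0 by ring. apply lsc_r0. Qed.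
Lemma opp_lsc x : vopp x = lsc (Qreal (- (1))) x.
Proof. rewrite lsc_ropp, lsc_r1; auto. Qed.
Lemma vnorm_opp x : vnorm (vopp x) = vnorm x.
Proof. rewrite opp_lsc, vnorm_lsc, Qnorm_real. rewrite Rabs_Ropp, Rabs_R1; ring. Qed.
Lemma vnorm_lscr r x : vnorm (lsc (Qreal r) x) = Rabs r * vnorm x.
Proof. rewrite vnorm_lsc, Qnorm_real; auto. Qed.

Lemma rsc0v q : rsc (@vzero U) q = vzero.
Proof. apply self_add_eq0. rewrite <- rsc_addv, vadd0; auto. Qed.
Lemma rscN q x : rsc (vopp x) q = vopp (rsc x q).
Proof. apply opp_unique. rewrite <- rsc_addv, vaddN, rsc0v; auto. Qed.
Lemma rsc_r0 x : rsc x (Qreal 0) = vzero.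
Proof. apply self_add_eq0. rewrite <- rsc_addq, Qadd_real, Rplus_0_r; auto. Qed.
Lemma rsc_radd r s x : rsc x (Qreal (r + s)) = vadd (rsc x (Qreal r)) (rsc x (Qreal s)).
Proof. rewrite <- Qadd_real, rsc_addq; auto. Qed.
Lemma rsc_ropp r x : rsc x (Qreal (- r)) = vopp (rsc x (Qreal r)).
Proof. apply opp_unique. rewrite <- rsc_radd. replace (r + - r) with 0 by ring. apply rsc_r0. Qed.
Lemma vnorm_rscr r x : vnorm (rsc x (Qreal r)) = Rabs r * vnorm x.
Proof. rewrite vnorm_rsc, Qnorm_real; auto. Qed.

Lemma lsc_rsc_nat (k : nat) x : lsc (Qreal (INR k)) x = rsc x (Qreal (INR k)).
Proof.
  induction k.
  - simpl. rewrite lsc_r0, rsc_r0; auto.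
  - rewrite S_INR, lsc_radd, rsc_radd, IHk. rewrite lsc_r1. f_equal. symmetry; apply rsc_one.
Qed.
Lemma lsc_rsc_Z (m : Z) x : lsc (Qreal (IZR m)) x = rsc x (Qreal (IZR m)).
Proof.
  destruct (Z_le_gt_dec 0 m) as [h|h].
  - rewrite <- (Z2Nat.id m h), <- INR_IZR_INZ. apply lsc_rsc_nat.
  - replace (IZR m) with (- INR (Z.to_nat (- m))).
    + rewrite lsc_ropp, rsc_ropp, lsc_rsc_nat; auto.
    + rewrite INR_IZR_INZ, Z2Nat.id by lia. rewrite opp_IZR; ring.
Qed.

Lemma small_zero z : (forall eps, 0 < eps -> vnorm z < eps) -> z = vzero.
Proof.
  intro H. apply vnorm_eq0. destruct (Req_dec (vnorm z) 0) as [e|n]; auto.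
  pose proof (vnorm_ge0 _ z). specialize (H (vnorm z)). lra.
Qed.

Definition Dd r x := vadd (lsc (Qreal r) x) (vopp (rsc x (Qreal r))).

Lemma Dd_add r s x : Dd (r + s) x = vadd (Dd r x) (Dd s x).
Proof.
  unfold Dd. rewrite lsc_radd, rsc_radd, oppD.
  rewrite <- !vaddA. f_equal. rewrite !vaddA. f_equal. apply vaddC.
Qed.
Lemma Dd_Z (m : Z) x : Dd (IZR m) x = vzero.
Proof. unfold Dd. rewrite lsc_rsc_Z, vaddN; auto. Qed.
Lemma Dd_nat_mul (N : nat) r x : Dd (INR N * r) x = lsc (Qreal (INR N)) (Dd r x).
Proof.
  unfold Dd. rewrite lscD, lscN, lsc_rmul. f_equal. f_equal.
  rewrite Rmult_comm, <- Qmul_real, rsc_mul, lsc_rsc_nat; auto.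
Qed.
Lemma Dd_bound r x : vnorm (Dd r x) <= 2 * Rabs r * vnorm x.
Proof.
  unfold Dd. eapply Rle_trans; [apply vnorm_triangle|].
  rewrite vnorm_opp, vnorm_lscr, vnorm_rscr. lra.
Qed.

Lemma lsc_rsc_real r x : lsc (Qreal r) x = rsc x (Qreal r).
Proof.
  apply sub_eq. fold (Dd r x). apply small_zero. intros eps Heps.
  destruct (INR_archimed eps (2 * vnorm x) Heps) as [N HN].
  assert (HN1 : (0 < N)%nat).
  { destruct N; [simpl in HN; pose proof (vnorm_ge0 _ x); lra | lia]. }
  assert (HNp : 0 < INR N) by (apply lt_0_INR; auto).
  pose (k := (up (INR N * r) - 1)%Z).
  destruct (archimed (INR N * r)) as [h1 h2].
  assert (Hk : Rabs (INR N * r - IZR k) <= 1).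
  { unfold k. rewrite minus_IZR. apply Rabs_le. lra. }
  assert (E : INR N * vnorm (Dd r x) <= 2 * vnorm x).
  { rewrite <- (Rabs_pos_eq (INR N)) by lra. rewrite <- vnorm_lscr, <- Dd_nat_mul.
    replace (INR N * r) with ((INR N * r - IZR k) + IZR k) by ring.
    rewrite Dd_add, Dd_Z, vadd0. eapply Rle_trans; [apply Dd_bound|].
    pose proof (vnorm_ge0 _ x). nra. }
  pose proof (vnorm_ge0 _ (Dd r x)). nra.
Qed.

Lemma mul_lsc_r r x y : vmul x (lsc (Qreal r) y) = lsc (Qreal r) (vmul x y).
Proof. rewrite !lsc_rsc_real. symmetry; apply rsc_vmul. Qed.
Lemma mul_lsc_l r x y : vmul (lsc (Qreal r) x) y = lsc (Qreal r) (vmul x y).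
Proof. symmetry; apply lsc_vmul. Qed.

End G.

Section N.
Variable U : QBA.
Implicit Types x y z : car U.

Fixpoint pw y (k : nat) : car U := match k with O => vone | S k => vmul y (pw y k) end.
Fixpoint ps y (k : nat) : car U := match k with O => vzero | S k => vadd (ps y k) (pw y k) end.

Lemma pw_comm y k : vmul (pw y k) y = vmul y (pw y k).
Proof.
  induction k; simpl. rewrite vmul1l, vmul1r; auto.
  rewrite <- vmulA, IHk; auto.
Qed.

Lemma pw_bound y k : vnorm y <= /2 -> vnorm (pw y k) <= (/2) ^ k.
Proof.
  intro H. induction k; simpl. rewrite vnorm_one; lra.
  eapply Rle_trans; [apply vnorm_mul|]. apply Rmult_le_compat; auto using vnorm_ge0.
Qed.

Lemma ps_diff y n j : vnorm y <= /2 ->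
  vnorm (vadd (ps y (j + n)) (vopp (ps y n))) <= 2 * (/2)^n - 2 * (/2)^(j+n).
Proof.
  intro H. induction j; simpl.
  - rewrite vaddN, vnorm0; lra.
  - replace (vadd (vadd (ps y (j + n)) (pw y (j + n))) (vopp (ps y n)))
      with (vadd (vadd (ps y (j + n)) (vopp (ps y n))) (pw y (j + n))).
    + eapply Rle_trans; [apply vnorm_triangle|].
      pose proof (pw_bound y (j+n) H). lra.
    + rewrite <- !vaddA. f_equal. apply vaddC.
Qed.

Lemma half_pow_pos n : 0 < (/2)^n.
Proof. apply pow_lt; lra. Qed.

Lemma ps_cauchy y : vnorm y <= /2 ->
  forall eps, 0 < eps -> exists N, forall m n, (N <= m)%nat -> (N <= n)%nat ->
        vnorm (vadd (ps y m) (vopp (ps y n))) < eps.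
Proof.
  intros H eps He.
  destruct (pow_lt_1_zero (/2) ltac:(rewrite Rabs_pos_eq; lra) (eps/2) ltac:(lra)) as [N HN].
  exists N. intros m n Hm Hn.
  assert (G : forall m n, (N <= n)%nat -> (n <= m)%nat -> vnorm (vadd (ps y m) (vopp (ps y n))) < eps).
  { intros m' n' Hn' Hmn. replace m' with ((m' - n') + n')%nat by lia.
    eapply Rle_lt_trans; [apply ps_diff; auto|].
    specialize (HN n' Hn'). rewrite Rabs_pos_eq in HN by (left; apply half_pow_pos).
    pose proof (half_pow_pos (m' - n' + n')). lra. }
  destruct (le_lt_dec n m).
  - apply G; auto.
  - rewrite <- vnorm_opp, oppD, oppK, vaddC. apply G; lia.
Qed.

Lemma onemy_ps y k : vmul (vadd vone (vopp y)) (ps y k) = vadd vone (vopp (pw y k)).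
Proof.
  induction k; simpl. rewrite mulr0, vaddN; auto.
  rewrite vmulDr, IHk, vmulDl, vmul1l, mulNr.
  rewrite <- !vaddA. f_equal. rewrite vaddA, addNl, add0l; auto.
Qed.
Lemma ps_onemy y k : vmul (ps y k) (vadd vone (vopp y)) = vadd vone (vopp (pw y k)).
Proof.
  induction k; simpl. rewrite mul0r, vaddN; auto.
  rewrite vmulDl, IHk, vmulDr, vmul1r, mulrN, pw_comm.
  rewrite <- !vaddA. f_equal. rewrite vaddA, addNl, add0l; auto.
Qed.

Lemma ac1 a b c : vadd (vadd (vadd a b) c) (vopp b) = vadd c a :> car U.
Proof.
  replace (vadd (vadd a b) c) with (vadd (vadd c a) b). apply sub_addr.
  rewrite (vaddC _ c a), <- vaddA, (vaddC _ c b), vaddA; auto.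
Qed.

Lemma neumann y : vnorm y <= /2 -> invertible (vadd vone (vopp y)).
Proof.
  intro H. destruct (vcomplete U (ps y) (ps_cauchy y H)) as [l Hl].
  set (m := vadd vone (vopp y)).
  assert (Hm : vnorm m <= 2).
  { unfold m. eapply Rle_trans; [apply vnorm_triangle|]. rewrite vnorm_one, vnorm_opp. lra. }
  assert (Hpw : forall eps, 0 < eps -> exists N, forall n, (N <= n)%nat -> vnorm (pw y n) < eps).
  { intros eps He.
    destruct (pow_lt_1_zero (/2) ltac:(rewrite Rabs_pos_eq; lra) eps He) as [N HN].
    exists N; intros n Hn. specialize (HN n Hn). rewrite Rabs_pos_eq in HN by (left; apply half_pow_pos).
    pose proof (pw_bound y n H); lra. }
  exists l; split.
  - apply sub_eq, small_zero. intros eps He.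
    destruct (Hl (eps/4) ltac:(lra)) as [N1 H1]. destruct (Hpw (eps/2) ltac:(lra)) as [N2 H2].
    set (k := (N1 + N2)%nat).
    replace (vadd (vmul m l) (vopp vone))
      with (vadd (vopp (vmul m (vadd (ps y k) (vopp l)))) (vopp (pw y k))).
    + eapply Rle_lt_trans; [apply vnorm_triangle|]. rewrite !vnorm_opp.
      specialize (H1 k ltac:(lia)). specialize (H2 k ltac:(lia)).
      pose proof (vnorm_mul _ m (vadd (ps y k) (vopp l))).
      pose proof (vnorm_ge0 _ (vadd (ps y k) (vopp l))).
      pose proof (vnorm_ge0 _ m). nra.
    + assert (E : vmul m (ps y k) = vadd vone (vopp (pw y k))) by apply onemy_ps.
      rewrite vmulDr, mulrN, oppD, oppK, E, oppD, oppK.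
      apply ac1.
  - apply sub_eq, small_zero. intros eps He.
    destruct (Hl (eps/4) ltac:(lra)) as [N1 H1]. destruct (Hpw (eps/2) ltac:(lra)) as [N2 H2].
    set (k := (N1 + N2)%nat).
    replace (vadd (vmul l m) (vopp vone))
      with (vadd (vopp (vmul (vadd (ps y k) (vopp l)) m)) (vopp (pw y k))).
    + eapply Rle_lt_trans; [apply vnorm_triangle|]. rewrite !vnorm_opp.
      specialize (H1 k ltac:(lia)). specialize (H2 k ltac:(lia)).
      pose proof (vnorm_mul _ (vadd (ps y k) (vopp l)) m).
      pose proof (vnorm_ge0 _ (vadd (ps y k) (vopp l))).
      pose proof (vnorm_ge0 _ m). nra.
    + assert (E : vmul (ps y k) m = vadd vone (vopp (pw y k))) by apply ps_onemy.
      rewrite vmulDl, mulNr, oppD, oppK, E, oppD, oppK.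
      apply ac1.
Qed.

End N.

Definition R2 {U : QBA} (s n : R) (v : car U) : car U :=
  vadd (vadd (vmul v v) (vopp (lsc (Qreal s) v))) (lsc (Qreal n) vone).

Lemma lsc_comm (U : QBA) r r' (x : car U) : lsc (Qreal r) (lsc (Qreal r') x) = lsc (Qreal r') (lsc (Qreal r) x).
Proof. rewrite <- !lsc_rmul, Rmult_comm; auto. Qed.

Lemma ac4 (U : QBA) (A1 A2 B1 B2 C : car U) :
  vadd (vadd A1 A2) (vadd (vadd B1 B2) C) = vadd (vadd (vadd A1 B1) (vadd A2 B2)) C.
Proof.
  rewrite !vaddA. f_equal. rewrite <- !vaddA. f_equal.
  rewrite !vaddA. f_equal. apply vaddC.
Qed.

Section K.
Variable V : QBA.
Variable I : car V -> Prop.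
Hypothesis I0 : I vzero.
Hypothesis Iadd : forall x y, I x -> I y -> I (vadd x y).
Hypothesis Isc : forall r x, I x -> I (lsc (Qreal r) x).
Hypothesis IL : forall x y, I x -> I (vmul y x).
Hypothesis IR : forall x y, I x -> I (vmul x y).

Lemma Iopp x : I x -> I (vopp x).
Proof. intro h; rewrite opp_lsc; auto. Qed.

Definition E (x y : car V) := I (vadd x (vopp y)).

Lemma E_refl x : E x x.
Proof. unfold E; rewrite vaddN; auto. Qed.
Lemma E_sym x y : E x y -> E y x.
Proof.
  unfold E; intro h. apply Iopp in h. rewrite oppD, oppK, vaddC in h; auto.
Qed.
Lemma ac2 (x y z : car V) : vadd x (vopp z) = vadd (vadd x (vopp y)) (vadd y (vopp z)).
Proof. rewrite <- vaddA, (vaddA _ (vopp y)), addNl, add0l; auto. Qed.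
Lemma E_trans x y z : E x y -> E y z -> E x z.
Proof. unfold E; intros h1 h2. rewrite (ac2 x y z); auto. Qed.

Add Parametric Relation : (car V) E
  reflexivity proved by E_refl symmetry proved by E_sym transitivity proved by E_trans
  as E_rel.

Lemma ac3 (x y x' y' : car V) :
  vadd (vadd x y) (vopp (vadd x' y')) = vadd (vadd x (vopp x')) (vadd y (vopp y')).
Proof.
  rewrite oppD, <- !vaddA. f_equal. rewrite !vaddA. f_equal. apply vaddC.
Qed.

Add Parametric Morphism : (@vadd V) with signature E ==> E ==> E as vadd_mor.
Proof. intros x x' h y y' h'. unfold E in *. rewrite ac3; auto. Qed.

Add Parametric Morphism : (@vmul V) with signature E ==> E ==> E as vmul_mor.
Proof.
  intros x x' h y y' h'. unfold E in *.
  rewrite (ac2 (vmul x y) (vmul x' y) (vmul x' y')).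
  apply Iadd.
  - rewrite <- mulNr, <- vmulDl; auto.
  - rewrite <- mulrN, <- vmulDr; auto.
Qed.

Add Parametric Morphism r : (@lsc V (Qreal r)) with signature E ==> E as lsc_mor.
Proof. intros x x' h. unfold E in *. rewrite <- lscN, <- lscD; auto. Qed.

Add Parametric Morphism : (@vopp V) with signature E ==> E as vopp_mor.
Proof. intros x x' h. unfold E in *. rewrite <- oppD; auto using Iopp. Qed.

Lemma E_eq x y : x = y -> E x y.
Proof. intros ->; reflexivity. Qed.
Lemma E_I0 x : I x -> E x vzero.
Proof. unfold E; rewrite opp0, vadd0; auto. Qed.

Lemma key s n a b : I (vmul a b) -> I (vmul b a) ->
  E (vmul (R2 s n a) (R2 s n b)) (lsc (Qreal n) (R2 s n (vadd a b))).
Proof.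
  intros hab hba.
  assert (e1 : E (vmul a b) vzero) by (apply E_I0; auto).
  assert (e2 : E (vmul b a) vzero) by (apply E_I0; auto).
  assert (e3 : E (vmul a (vmul b b)) vzero) by (apply E_I0; rewrite vmulA; auto).
  unfold R2.
  rewrite !vmulDl, !vmulDr, !mulNr, !mulrN, !mul_lsc_l, !mul_lsc_r, !vmul1l, !vmul1r.
  rewrite <- !vmulA.
  rewrite e1, e2, e3.
  rewrite ?mulr0, ?mul0r, ?lsc0v, ?opp0, ?vadd0, ?add0l.
  apply E_eq.
  rewrite (lsc_comm _ s n a).
  rewrite !lscD, !lscN, !lscD, !oppD.
  apply ac4.
Qed.
End K.

Lemma E_decomp (V : QBA) (I : car V -> Prop) x y : E V I x y -> exists K, I K /\ x = vadd y K.
Proof. unfold E; intro h. exists (vadd x (vopp y)). split; auto. rewrite vaddC, addr_sub; auto. Qed.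

Section Inv.
Variable U : QBA.
Implicit Types x y z : car U.
Lemma inv_one : invertible (@vone U).
Proof. exists vone; rewrite vmul1l; auto. Qed.
Lemma inv_mul x y : invertible x -> invertible y -> invertible (vmul x y).
Proof.
  intros [x' [h1 h2]] [y' [h3 h4]]. exists (vmul y' x'). split.
  - rewrite <- vmulA, (vmulA _ y), h3, vmul1l, h1; auto.
  - rewrite <- vmulA, (vmulA _ x'), h2, vmul1l, h4; auto.
Qed.
Lemma inv_both x y : invertible (vmul x y) -> invertible (vmul y x) -> invertible x.
Proof.
  intros [c [h1 h2]] [d [h3 h4]].
  exists (vmul y c). split.
  - rewrite vmulA; auto.
  - assert (e : vmul (vmul d y) x = vone) by (rewrite <- vmulA; auto).
    assert (r : vmul x (vmul y c) = vone) by (rewrite vmulA; auto).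
    assert (e2 : vmul d y = vmul y c).
    { transitivity (vmul (vmul d y) (vmul x (vmul y c))).
      rewrite r, vmul1r; auto. rewrite vmulA, e, vmul1l; auto. }
    rewrite <- e2. exact e.
Qed.
Lemma inv_sc r x : r <> 0 -> invertible x -> invertible (lsc (Qreal r) x).
Proof.
  intros hr [x' [h1 h2]]. exists (lsc (Qreal (/r)) x'). split.
  - rewrite mul_lsc_l, mul_lsc_r, h1, <- lsc_rmul, Rinv_r; auto. apply lsc_r1.
  - rewrite mul_lsc_l, mul_lsc_r, h2, <- lsc_rmul, Rinv_l; auto. apply lsc_r1.
Qed.
Lemma lsc_inv_cancel r x : r <> 0 -> lsc (Qreal (/r)) (lsc (Qreal r) x) = x.
Proof. intro hr. rewrite <- lsc_rmul, Rinv_l; auto. apply lsc_r1. Qed.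
Lemma inv_sc_rev r x : r <> 0 -> invertible (lsc (Qreal r) x) -> invertible x.
Proof.
  intros hr h. rewrite <- (lsc_inv_cancel r x hr). apply inv_sc; auto.
  apply Rinv_neq_0_compat; auto.
Qed.

Lemma two_inv x : exists u1 u2, invertible u1 /\ invertible u2 /\ x = vadd u1 u2.
Proof.
  set (l := 2 * vnorm x + 1).
  pose proof (vnorm_ge0 _ x).
  assert (hl : 0 < l) by (unfold l; lra).
  set (y := lsc (Qreal (/l)) x).
  assert (hy : vnorm y <= /2).
  { unfold y. rewrite vnorm_lscr, Rabs_pos_eq by (left; apply Rinv_0_lt_compat; auto).
    apply (Rmult_le_reg_l l); auto. rewrite <- Rmult_assoc, Rinv_r by lra. unfold l. lra. }
  exists (lsc (Qreal (- l)) (vadd vone (vopp y))), (lsc (Qreal l) vone).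
  split; [|split].
  - apply inv_sc; [lra|]. apply neumann; auto.
  - apply inv_sc; [lra|apply inv_one].
  - rewrite lscD, lscN. unfold y. rewrite <- lsc_rmul.
    replace (- l * / l) with (- (1)) by (field; lra).
    rewrite (lsc_ropp _ 1 x), lsc_r1, oppK, (lsc_ropp _ l vone), (vaddC _ (vopp _)), addr_sub; auto.
Qed.
End Inv.

Section Main.
Variables V W : QBA.
Variable A : car V -> car W.
Hypothesis hA : is_hom V W A.

Lemma A_add u v : A (vadd u v) = vadd (A u) (A v).
Proof. apply hA. Qed.
Lemma A_mul u v : A (vmul u v) = vmul (A u) (A v).
Proof. apply hA. Qed.
Lemma A_lsc q u : A (lsc q u) = lsc q (A u).
Proof. apply hA. Qed.
Lemma A_one : A vone = vone.
Proof. apply hA. Qed.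
Lemma A_zero : A vzero = vzero.
Proof. apply self_add_eq0. rewrite <- A_add, vadd0; auto. Qed.
Lemma A_opp u : A (vopp u) = vopp (A u).
Proof. apply opp_unique. rewrite <- A_add, vaddN, A_zero; auto. Qed.

Lemma F_inv u : invertible u -> Fredholm A u.
Proof.
  intros [u' [h1 h2]]. exists (A u'). rewrite <- !A_mul, h1, h2, A_one; auto.
Qed.
Lemma F_mul x y : Fredholm A x -> Fredholm A y -> Fredholm A (vmul x y).
Proof. unfold Fredholm; rewrite A_mul; apply inv_mul. Qed.
Lemma F_both x y : Fredholm A (vmul x y) -> Fredholm A (vmul y x) -> Fredholm A x.
Proof. unfold Fredholm; rewrite !A_mul; apply inv_both. Qed.
Lemma F_sc r x : r <> 0 -> Fredholm A x -> Fredholm A (lsc (Qreal r) x).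
Proof. unfold Fredholm; rewrite A_lsc; apply inv_sc. Qed.
Lemma F_sc_rev r x : r <> 0 -> Fredholm A (lsc (Qreal r) x) -> Fredholm A x.
Proof. unfold Fredholm; rewrite A_lsc; apply inv_sc_rev. Qed.

Lemma Pr0 : FredPert A vzero.
Proof. intros t h; rewrite add0l; auto. Qed.
Lemma Pr_add p p' : FredPert A p -> FredPert A p' -> FredPert A (vadd p p').
Proof. intros h h' t ht. rewrite <- vaddA. apply h, h', ht. Qed.
Lemma Pr_invL p u : FredPert A p -> invertible u -> FredPert A (vmul u p).
Proof.
  intros h [u' [h1 h2]] t ht.
  replace (vadd (vmul u p) t) with (vmul u (vadd p (vmul u' t))).
  - apply F_mul. apply F_inv; exists u'; auto. apply h, F_mul; auto. apply F_inv; exists u; auto.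
  - rewrite vmulDr, vmulA, h1, vmul1l; auto.
Qed.
Lemma Pr_invR p u : FredPert A p -> invertible u -> FredPert A (vmul p u).
Proof.
  intros h [u' [h1 h2]] t ht.
  replace (vadd (vmul p u) t) with (vmul (vadd p (vmul t u')) u).
  - apply F_mul. apply h, F_mul; auto. apply F_inv; exists u; auto. apply F_inv; exists u'; auto.
  - rewrite vmulDl, <- vmulA, h2, vmul1r; auto.
Qed.
Lemma Pr_L p y : FredPert A p -> FredPert A (vmul y p).
Proof.
  intro h. destruct (two_inv _ y) as [u1 [u2 [h1 [h2 ->]]]].
  rewrite vmulDl. apply Pr_add; apply Pr_invL; auto.
Qed.
Lemma Pr_R p y : FredPert A p -> FredPert A (vmul p y).
Proof.
  intro h. destruct (two_inv _ y) as [u1 [u2 [h1 [h2 ->]]]].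
  rewrite vmulDr. apply Pr_add; apply Pr_invR; auto.
Qed.
Lemma Pr_sc r p : FredPert A p -> FredPert A (lsc (Qreal r) p).
Proof. intro h. rewrite <- (vmul1l _ p), <- mul_lsc_l. apply Pr_L; auto. Qed.

Definition Ker (x : car V) := A x = vzero.
Lemma K0 : Ker vzero.
Proof. apply A_zero. Qed.
Lemma K_add x y : Ker x -> Ker y -> Ker (vadd x y).
Proof. unfold Ker; intros h h'; rewrite A_add, h, h', vadd0; auto. Qed.
Lemma K_sc r x : Ker x -> Ker (lsc (Qreal r) x).
Proof. unfold Ker; intros h; rewrite A_lsc, h, lsc0v; auto. Qed.
Lemma K_L x y : Ker x -> Ker (vmul y x).
Proof. unfold Ker; intros h; rewrite A_mul, h, mulr0; auto. Qed.
Lemma K_R x y : Ker x -> Ker (vmul x y).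
Proof. unfold Ker; intros h; rewrite A_mul, h, mul0r; auto. Qed.

Lemma Wy_F x : Weyl A x -> Fredholm A x.
Proof.
  intros [u [k [hu [hk ->]]]]. unfold Fredholm. rewrite A_add, hk, vadd0.
  apply F_inv; auto.
Qed.
Lemma Wy_add x k : Weyl A x -> Ker k -> Weyl A (vadd x k).
Proof.
  intros [u [k' [hu [hk ->]]]] h. exists u, (vadd k' k). repeat split; auto.
  apply K_add; auto. rewrite vaddA; auto.
Qed.
Lemma Wy_mul x y : Weyl A x -> Weyl A y -> Weyl A (vmul x y).
Proof.
  intros [u [k [hu [hk ->]]]] [u' [k' [hu' [hk' ->]]]].
  exists (vmul u u'), (vadd (vmul u k') (vmul k (vadd u' k'))).
  repeat split. apply inv_mul; auto.
  apply K_add. apply K_L; auto. apply K_R; auto.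
  rewrite vmulDl, vmulDr, vaddA; auto.
Qed.
Lemma Wy_sc r x : r <> 0 -> Weyl A x -> Weyl A (lsc (Qreal r) x).
Proof.
  intros hr [u [k [hu [hk ->]]]]. exists (lsc (Qreal r) u), (lsc (Qreal r) k).
  repeat split. apply inv_sc; auto. apply K_sc; auto. apply lscD.
Qed.
Lemma Wy_sc_rev r x : r <> 0 -> Weyl A (lsc (Qreal r) x) -> Weyl A x.
Proof.
  intros hr h. rewrite <- (lsc_inv_cancel _ r x hr). apply Wy_sc; auto.
  apply Rinv_neq_0_compat; auto.
Qed.
Lemma Wy_invL u y : invertible u -> Weyl A (vmul u y) -> Weyl A y.
Proof.
  intros [u' [h1 h2]] [u2 [k2 [hu [hk e]]]].
  exists (vmul u' u2), (vmul u' k2). repeat split.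
  apply inv_mul; auto. exists u; auto. apply K_L; auto.
  rewrite <- vmulDr, <- e, vmulA, h2, vmul1l; auto.
Qed.
End Main.

Lemma eq_sub (U : QBA) (x y K : car U) : x = vadd y K -> y = vadd x (vopp K).
Proof. intros ->; rewrite sub_addr; auto. Qed.

Lemma n_nz q : q <> Qzero -> Qnorm q ^ 2 <> 0.
Proof.
  intro hq. unfold Qnorm. rewrite pow2_sqrt.
  - intro h. apply hq. destruct q as [x0 x1 x2 x3]; simpl in h.
    assert (x0 = 0) by nra. assert (x1 = 0) by nra. assert (x2 = 0) by nra. assert (x3 = 0) by nra.
    subst; reflexivity.
  - destruct q; simpl; nra.
Qed.

Lemma Rq_R2 (U : QBA) q (v : car U) : Rq q v = R2 (2 * Qre q) (Qnorm q ^ 2) v.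
Proof. reflexivity. Qed.

Theorem mainTheorem1 (V W : QBA)
  (hV : @vone V <> @vzero V) (hW : @vone W <> @vzero W)
  (A : car V -> car W) (hA : is_hom V W A) (a b : car V) :
  ((FredPert A (vmul a b) /\ FredPert A (vmul b a)) ->
     forall q, q <> Qzero ->
       (fred_spec A (vadd a b) q <-> fred_spec A a q \/ fred_spec A b q))
  /\
  ((A (vmul a b) = vzero /\ A (vmul b a) = vzero) ->
     (forall q, q <> Qzero ->
        weyl_spec A (vadd a b) q -> weyl_spec A a q \/ weyl_spec A b q)
     /\
     ((forall q, weyl_spec A a q <-> fred_spec A a q) ->
        forall q, q <> Qzero ->
          (weyl_spec A (vadd a b) q <-> weyl_spec A a q \/ weyl_spec A b q))).
Proof.
  split.
  - intros [hab hba] q hq. unfold fred_spec. rewrite !Rq_R2.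
    set (s := 2 * Qre q). set (n := Qnorm q ^ 2).
    assert (hn : n <> 0) by (apply n_nz; auto).
    destruct (E_decomp _ _ _ _ (key V (FredPert A) (Pr0 V W A) (Pr_add V W A) (Pr_sc V W A hA)
       (Pr_L V W A hA) (Pr_R V W A hA) s n a b hab hba)) as [K1 [hK1 e1]].
    destruct (E_decomp _ _ _ _ (key V (FredPert A) (Pr0 V W A) (Pr_add V W A) (Pr_sc V W A hA)
       (Pr_L V W A hA) (Pr_R V W A hA) s n b a hba hab)) as [K2 [hK2 e2]].
    rewrite (vaddC _ b a) in e2.
    split.
    + intros hZ. apply NNPP; intro hn'. apply not_or_and in hn' as [ha hb].
      apply NNPP in ha. apply NNPP in hb. apply hZ. apply (F_sc_rev V W A hA n); auto.
      rewrite (eq_sub _ _ _ _ e1), vaddC. apply (Pr_sc V W A hA (- (1))) in hK1.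
      rewrite <- opp_lsc in hK1. apply hK1. apply F_mul; auto.
    + intros hab' hZ.
      assert (f1 : Fredholm A (vmul (R2 s n a) (R2 s n b))).
      { rewrite e1, vaddC. apply hK1. apply F_sc; auto. }
      assert (f2 : Fredholm A (vmul (R2 s n b) (R2 s n a))).
      { rewrite e2, vaddC. apply hK2. apply F_sc; auto. }
      destruct hab' as [h|h]; apply h.
      * apply (F_both V W A hA _ _ f1 f2).
      * apply (F_both V W A hA _ _ f2 f1).
  - intros [hab hba].
    assert (main : forall q, q <> Qzero -> exists K1 K2,
       Ker V W A K1 /\ Ker V W A K2 /\
       vmul (Rq q a) (Rq q b) = vadd (lsc (Qreal (Qnorm q ^ 2)) (Rq q (vadd a b))) K1 /\
       vmul (Rq q b) (Rq q a) = vadd (lsc (Qreal (Qnorm q ^ 2)) (Rq q (vadd a b))) K2).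
    { intros q hq. rewrite !Rq_R2.
      set (s := 2 * Qre q). set (n := Qnorm q ^ 2).
      destruct (E_decomp _ _ _ _ (key V (Ker V W A) (K0 V W A hA) (K_add V W A hA) (K_sc V W A hA)
         (K_L V W A hA) (K_R V W A hA) s n a b hab hba)) as [K1 [hK1 e1]].
      destruct (E_decomp _ _ _ _ (key V (Ker V W A) (K0 V W A hA) (K_add V W A hA) (K_sc V W A hA)
         (K_L V W A hA) (K_R V W A hA) s n b a hba hab)) as [K2 [hK2 e2]].
      rewrite (vaddC _ b a) in e2. exists K1, K2; auto. }
    assert (Kopp : forall k, Ker V W A k -> Ker V W A (vopp k)).
    { unfold Ker; intros k hk. rewrite A_opp, hk, opp0; auto. }
    assert (part1 : forall q, q <> Qzero ->
        weyl_spec A (vadd a b) q -> weyl_spec A a q \/ weyl_spec A b q).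
    { intros q hq hZ. unfold weyl_spec in *.
      destruct (main q hq) as [K1 [K2 [hK1 [hK2 [e1 e2]]]]].
      apply NNPP; intro hn'. apply not_or_and in hn' as [ha hb].
      apply NNPP in ha. apply NNPP in hb. apply hZ.
      apply (Wy_sc_rev V W A hA (Qnorm q ^ 2)). apply n_nz; auto.
      rewrite (eq_sub _ _ _ _ e1). apply Wy_add; auto. apply Wy_mul; auto. }
    split; auto.
    intros H q hq. split; [apply part1; auto|].
    destruct (main q hq) as [K1 [K2 [hK1 [hK2 [e1 e2]]]]].
    assert (hn : Qnorm q ^ 2 <> 0) by (apply n_nz; auto).
    intros hab' hZ. unfold weyl_spec in *.
    assert (FZ : Fredholm A (lsc (Qreal (Qnorm q ^ 2)) (Rq q (vadd a b)))).
    { apply F_sc; auto. apply (Wy_F V W A hA); auto. }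
    assert (f1 : Fredholm A (vmul (Rq q a) (Rq q b))).
    { rewrite e1. unfold Fredholm in *. rewrite A_add; auto. unfold Ker in hK1. rewrite hK1, vadd0; auto. }
    assert (f2 : Fredholm A (vmul (Rq q b) (Rq q a))).
    { rewrite e2. unfold Fredholm in *. rewrite A_add; auto. unfold Ker in hK2. rewrite hK2, vadd0; auto. }
    assert (Fa : Fredholm A (Rq q a)) by apply (F_both V W A hA _ _ f1 f2).
    assert (Wa : Weyl A (Rq q a)).
    { apply NNPP. intro hw. apply (H q) in hw. apply hw; auto. }
    assert (WXY : Weyl A (vmul (Rq q a) (Rq q b))).
    { rewrite e1. apply Wy_add; auto. apply Wy_sc; auto. }
    assert (Wb : Weyl A (Rq q b)).
    { destruct Wa as [u1 [k1 [hu1 [hk1 ea]]]].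
      apply (Wy_invL V W A hA u1); auto.
      assert (ee : vmul (Rq q a) (Rq q b) = vadd (vmul u1 (Rq q b)) (vmul k1 (Rq q b))).
      { rewrite ea, vmulDl; auto. }
      rewrite (eq_sub _ _ _ _ ee). apply Wy_add; auto. apply Kopp. apply K_R; auto. }
    destruct hab' as [h|h]; auto.
Qed.
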